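(* If $M\rightarrow_v N$, $t$ is a canonical term of $\Phi$ and $\langle\!\langle t\rangle\!\rangle=M$, then $t\rightarrow u$ in $\Phi$ for some term $u$ with $\langle\!\langle u\rangle\!\rangle=N$.
   Context: $\lambda$-terms: $M::=x\mid\lambda x.M\mid MN$, variables from a set $\Upsilon$ with a fixed total order, $FV(M)$ the ordered sequence of free variables. Values $V::=x\mid\lambda x.M$; weak call-by-value reduction $\rightarrow_v$: $(\lambda x.M)V\rightarrow_v M\{V/x\}$ for values $V$, closed under $ML$ and $LM$ contexts (no reduction under $\lambda$). $\Phi$: binary function symbol $\mathbf{app}$, constructors $c_{x,M}$ ($M$ a $\lambda$-term, $x\in\Upsilon$) of arity the length of $FV(\lambda x.M)$; $[\![x]\!]=x$, $[\![\lambda x.M]\!]=c_{x,M}(x_1,\dots,x_n)$ with $FV(\lambda x.M)=x_1,\dots,x_n$, $[\![MN]\!]=\mathbf{app}([\![M]\!],[\![N]\!])$; rules $\mathbf{app}(c_{x,M}(x_1,\dots,x_n),x)\rightarrow[\![M]\!]$; rewriting is call-by-value (a step replaces anywhere a subterm $l\sigma$ by $r\sigma$, $\sigma$ mapping variables to constructor terms, i.e. closed terms built only from constructors). $\langle\!\langle x\rangle\!\rangle=x$, $\langle\!\langle\mathbf{app}(u,v)\rangle\!\rangle=\langle\!\langle u\rangle\!\rangle\langle\!\langle v\rangle\!\rangle$, $\langle\!\langle c_{x,M}(t_1,\dots,t_n)\rangle\!\rangle=(\lambda x.M)\{\langle\!\langle t_1\rangle\!\rangle/x_1,\dots,\langle\!\langle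 t_n\rangle\!\rangle/x_n\}$. A closed term $t$ is canonical if it is a constructor term or $t=\mathbf{app}(u,v)$ with $u,v$ canonical. *)

(* Defs.v *)
From mathcomp Require Import all_boot.
Set Implicit Arguments. Unset Strict Implicit. Unset Printing Implicit Defensive.

(* Variables: the set Upsilon is nat, totally ordered by leq. *)

Inductive lam : Type :=
| Var : nat -> lam
| Lam : nat -> lam -> lam
| Ap  : lam -> lam -> lam.

Fixpoint fv (M : lam) : seq nat :=
  match M with
  | Var x => [:: x]
  | Lam x P => filter (fun y => y != x) (fv P)
  | Ap P Q => fv P ++ fv Q
  end.

Definition FV (M : lam) : seq nat := sort leq (undup (fv M)).

(* simultaneous substitution; only ever applied with closed terms in the
   range on relevant variables, where it coincides with capture-avoiding
   substitution *)
Fixpoint msubst (f : nat -> lam) (M : lam) : lam :=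
  match M with
  | Var y => f y
  | Lam y P => Lam y (msubst (fun z => if z == y then Var z else f z) P)
  | Ap P Q => Ap (msubst f P) (msubst f Q)
  end.

Definition subst1 (x : nat) (V : lam) (M : lam) : lam :=
  msubst (fun z => if z == x then V else Var z) M.

Definition is_value (M : lam) : bool :=
  match M with Var _ | Lam _ _ => true | Ap _ _ => false end.

Inductive cbv : lam -> lam -> Prop :=
| cbv_beta x M V : is_value V -> cbv (Ap (Lam x M) V) (subst1 x V M)
| cbv_appL M M' L : cbv M M' -> cbv (Ap M L) (Ap M' L)
| cbv_appR M M' L : cbv M M' -> cbv (Ap L M) (Ap L M').

(* C x M ts  is  c_{x,M}(ts);  App u v  is  app(u,v) *)
Inductive tm : Type :=
| V : nat -> tm
| App : tm -> tm -> tm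
| C : nat -> lam -> seq tm -> tm.

Fixpoint is_cterm (t : tm) : bool :=
  match t with
  | V _ => false
  | App _ _ => false
  | C x M ts => (size ts == size (FV (Lam x M))) && all is_cterm ts
  end.

Fixpoint canonical (t : tm) : bool :=
  match t with
  | App u v => canonical u && canonical v
  | _ => is_cterm t
  end.

Fixpoint enc (M : lam) : tm :=
  match M with
  | Var x => V x
  | Lam x P => C x P (map V (FV (Lam x P)))
  | Ap P Q => App (enc P) (enc Q)
  end.

Fixpoint tsubst (s : nat -> tm) (t : tm) : tm :=
  match t with
  | V x => s x
  | App u v => App (tsubst s u) (tsubst s v)
  | C x M ts => C x M (map (tsubst s) ts)
  end.

Definition assoc (xs : seq nat) (Ns : seq lam) (z : nat) : lam :=
  let i := index z xs in if i < size xs then nth (Var z) Ns i else Var z.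

Fixpoint dec (t : tm) : lam :=
  match t with
  | V x => Var x
  | App u v => Ap (dec u) (dec v)
  | C x M ts => msubst (assoc (FV (Lam x M)) (map dec ts)) (Lam x M)
  end.

Definition rule_lhs (x : nat) (M : lam) : tm :=
  App (C x M (map V (FV (Lam x M)))) (V x).
Definition rule_rhs (x : nat) (M : lam) : tm := enc M.

Inductive step : tm -> tm -> Prop :=
| step_root x M (s : nat -> tm) :
    (forall y, is_cterm (s y)) ->
    step (tsubst s (rule_lhs x M)) (tsubst s (rule_rhs x M))
| step_appL u u' v : step u u' -> step (App u v) (App u' v)
| step_appR u v v' : step v v' -> step (App u v) (App u v')
| step_C x M ts1 t t' ts2 : step t t' ->
    step (C x M (ts1 ++ t :: ts2)) (C x M (ts1 ++ t' :: ts2)).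

(* Main.v *)
Require Import Defs.
From mathcomp Require Import all_boot.

Fixpoint AllP (P : tm -> Prop) (ts : seq tm) : Prop :=
  match ts with nil => True | t :: r => P t /\ AllP P r end.

Section Ind.
Variable P : tm -> Prop.
Hypothesis HV : forall n, P (V n).
Hypothesis HA : forall u v, P u -> P v -> P (App u v).
Hypothesis HC : forall x M ts, AllP P ts -> P (C x M ts).
Fixpoint tm_ind2 (t : tm) : P t :=
  match t with
  | V n => HV n
  | App u v => @HA u v (tm_ind2 u) (tm_ind2 v)
  | C x M ts => @HC x M ts ((fix F (ts : seq tm) : AllP P ts :=
       match ts with nil => I | t :: r => conj (tm_ind2 t) (F r) end) ts)
  end.
End Ind.

Lemma AllP_nth P ts d i : AllP P ts -> i < size ts -> P (nth d ts i).
Proof. elim: ts i => [|t r IH] [|i] //= [H1 H2] Hi; auto. Qed.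

Lemma all_nth (p : pred tm) ts d i : all p ts -> p d -> p (nth d ts i).
Proof. elim: ts i => [|t r IH] [|i] //= /andP[H1 H2] Hd; auto. Qed.

Lemma all_nth_lt (p : pred tm) ts d i : all p ts -> i < size ts -> p (nth d ts i).
Proof. elim: ts i => [|t r IH] [|i] //= /andP[H1 H2] Hd; auto. Qed.

Lemma msubst_agree P : forall f g, (forall z, z \in fv P -> f z = g z) ->
  msubst f P = msubst g P.
Proof.
elim: P => [y|y Q IH|P1 IH1 P2 IH2] f g H /=.
- by apply: H; rewrite inE.
- congr Lam; apply: IH => z Hz; case: eqP => // Hzy; apply: H.
  by rewrite /= mem_filter Hz andbT; apply/eqP.
- by rewrite (IH1 f g) ?(IH2 f g) // => z Hz; apply: H; rewrite mem_cat Hz ?orbT.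
Qed.

Lemma msubst_id M : msubst (fun z => Var z) M = M.
Proof.
elim: M => [y|y Q IH|P1 IH1 P2 IH2] //=; last by rewrite IH1 IH2.
congr Lam; rewrite -[RHS]IH; apply: msubst_agree => z _; by case: eqP.
Qed.

Lemma msubst_closed g M : fv M = [::] -> msubst g M = M.
Proof.
move=> H; rewrite -[RHS]msubst_id; apply: msubst_agree => z; by rewrite H.
Qed.

Lemma fv_msubst P : forall f w, w \in fv (msubst f P) ->
  exists z, z \in fv P /\ w \in fv (f z).
Proof.
elim: P => [y|y Q IH|P1 IH1 P2 IH2] f w /=.
- by move=> H; exists y; rewrite inE eqxx.
- rewrite mem_filter => /andP[Hwy Hw].
  have [z [Hz Hwz]] := IH _ _ Hw.
  move: Hwz; case: (eqVneq z y) => [->|Hzy] /= Hwz.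
    by move: Hwz; rewrite inE => /eqP Ewy; rewrite Ewy eqxx in Hwy.
  by exists z; rewrite mem_filter Hzy Hz.
- rewrite mem_cat => /orP[H|H].
    by have [z [Hz Hwz]] := IH1 _ _ H; exists z; rewrite mem_cat Hz.
  by have [z [Hz Hwz]] := IH2 _ _ H; exists z; rewrite mem_cat Hz orbT.
Qed.

Lemma FV_mem {x M z} : z \in fv (Lam x M) -> z \in FV (Lam x M).
Proof. by rewrite /FV mem_sort mem_undup. Qed.

Lemma assoc_in {xs Ns z} d : z \in xs -> size Ns = size xs ->
  assoc xs (map dec Ns) z = dec (nth d Ns (index z xs)).
Proof.
move=> Hz Hs; rewrite /assoc index_mem Hz.
have Hi : index z xs < size Ns by rewrite Hs index_mem.
by rewrite (nth_map d).
Qed.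

Lemma closed_dec t : is_cterm t -> fv (dec t) = [::].
Proof.
elim/tm_ind2: t => // x M ts IH; rewrite [is_cterm _]/= => /andP[/eqP Hs Ha].
case E: (fv (dec (C x M ts))) => [|w r] //.
have Hw0 : w \in fv (dec (C x M ts)) by rewrite E inE eqxx.
have [z [Hz Hw]] := @fv_msubst (Lam x M) (assoc (FV (Lam x M)) (map dec ts)) w Hw0.
move: Hw; rewrite (assoc_in (V 0) (FV_mem Hz) Hs).
have Hi : index z (FV (Lam x M)) < size ts by rewrite Hs index_mem FV_mem.
rewrite (AllP_nth _ _ (V 0) _ IH Hi) //.
exact: all_nth_lt.

Qed.

Lemma msubst_comp P : forall f g,
  (forall z, f z = Var z \/ fv (f z) = [::]) ->
  msubst g (msubst f P) = msubst (fun z => msubst g (f z)) P.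
Proof.
elim: P => [y|y Q IH|P1 IH1 P2 IH2] f g H //=; last by rewrite IH1 ?IH2.
congr Lam; rewrite IH; last by move=> z; case: eqP => _; [left|apply: H].
apply: msubst_agree => z _; case: (eqVneq z y) => [->|Hzy] /=; first by rewrite eqxx.
case: (H z) => [->|Hc] /=; first by rewrite (negbTE Hzy).
by rewrite !msubst_closed.
Qed.

Lemma dec_enc P : forall s, dec (tsubst s (enc P)) = msubst (fun z => dec (s z)) P.
Proof.
elim: P => [y|y Q IH|P1 IH1 P2 IH2] s //=; last by rewrite IH1 IH2.
congr Lam; apply: msubst_agree => z Hz; case: (eqVneq z y) => // Hzy.
have Hz' : z \in fv (Lam y Q) by rewrite /= mem_filter Hzy Hz.
rewrite (assoc_in (V 0) (FV_mem Hz')) ?size_map //.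
by rewrite -map_comp (nth_map 0) ?index_mem ?FV_mem // nth_index ?FV_mem.
Qed.

Lemma map_nth_index (xs : seq nat) (ts : seq tm) d :
  uniq xs -> size ts = size xs ->
  map (fun z => nth d ts (index z xs)) xs = ts.
Proof.
move=> Hu Hs; apply: (@eq_from_nth _ d); first by rewrite size_map.
move=> i; rewrite size_map => Hi.
by rewrite (nth_map 0) // index_uniq.
Qed.

Theorem lemma7 (M N : lam) (t : tm) :
  cbv M N -> canonical t -> dec t = M ->
  exists u : tm, step t u /\ dec u = N.
Proof.
move=> H; elim: H t => [x P W HW|M0 M' L H IH|M0 M' L H IH] t.
- case: t => [n|u v|y Q ts] //= /andP[Hu Hv] [Eu Ev].
  case: u Hu Eu => [n|u1 u2|y P' ts] //= Hu [Ey EP]; subst y.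
  case: v Hv Ev => [m|v1 v2|z Q ss] //= Hv Ev; first by rewrite -Ev in HW.
  move/andP: Hu => [/eqP Hs Ha].
  set v := C z Q ss.
  have EW : dec v = W := Ev.
  set FVs := FV (Lam x P').
  set s := fun w => if w == x then v else if w \in FVs then nth v ts (index w FVs) else v.
  have Hxn : x \notin FVs by rewrite /FVs /FV mem_sort mem_undup /= mem_filter eqxx.
  have Hms : map s FVs = ts.
    rewrite -[RHS](map_nth_index _ _ v _ Hs); last by rewrite /FVs /FV sort_uniq undup_uniq.
    apply/eq_in_map => w Hw; rewrite /s Hw.
    by case: eqVneq Hw Hxn => // -> ->.
  have Hms' : map (tsubst s) (map V FVs) = ts by rewrite -map_comp; exact Hms.
  exists (tsubst s (enc P')); split.
    have -> : App (C x P' ts) v = tsubst s (rule_lhs x P') by rewrite /rule_lhs /= Hms' /s eqxx.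
    apply: step_root => w; rewrite /s; case: ifP => // _; case: ifP => // _.
    by apply: all_nth.
  rewrite dec_enc -EP -EW /subst1 msubst_comp; last first.
    move=> w; case: eqP => _; first by left.
    rewrite /assoc; case: ifP => Hi; last by left.
    right; rewrite (nth_map (V 0)) ?Hs //; apply: closed_dec; apply: all_nth_lt => //; by rewrite Hs.
  symmetry; apply: msubst_agree => w Hw; case: (eqVneq w x) => [->|Hwx] /=.
    by rewrite !eqxx /s eqxx.
  have Hw' : w \in fv (Lam x P') by rewrite /= mem_filter Hwx Hw.
  rewrite (assoc_in (V 0) (FV_mem Hw') Hs) msubst_closed; last first.
    apply: closed_dec; apply: all_nth_lt => //; by rewrite Hs index_mem FV_mem.
  rewrite /s (negbTE Hwx) FV_mem //; congr dec; apply: set_nth_default.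
  by rewrite Hs index_mem FV_mem.
- case: t => [n|u v|y Q ts] //= /andP[Hu Hv] [Eu Ev].
  have [u' [Hs Hd]] := IH u Hu Eu.
  by exists (App u' v); split; [apply: step_appL|rewrite /= Hd Ev].
- case: t => [n|u v|y Q ts] //= /andP[Hu Hv] [Eu Ev].
  have [v' [Hs Hd]] := IH v Hv Ev.
  by exists (App u v'); split; [apply: step_appR|rewrite /= Hd Eu].
Qed.
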